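(* Let $X=(X_1,\dots,X_d)$ be a random vector with values in $\{0,1\}^d$ such that $\mathbb{P}(X=x)>0$ for every $x\in\{0,1\}^d$. Let $V_\emptyset$ be the space of almost surely constant real random variables and, for nonempty $A\subseteq D:=\{1,\dots,d\}$, $V_A:=\left(\sum_{B\subsetneq A}V_B\right)^{\perp_A}$, the orthogonal complement taken inside $\mathbb{L}^2_A$. For $A\subseteq D$ let $e_A(X_A):=\dfrac{(-1)^{\sum_{j\in A}X_j}}{\mathbf{P}_A(X_A)}$, with $e_\emptyset(X_\emptyset)=1$. Then $V_A=\mathrm{span}(e_A(X_A))$ for every $A\subseteq D$; in particular $\{e_A(X_A)\}_{A\subseteq D}$ is a basis of the space of real-valued functions of $X$ which is hierarchically orthogonal (i.e. $\mathbb{E}[e_A(X_A)e_B(X_B)]=0$ whenever $B\subsetneq A$).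
   Context: For $A\subseteq D$, $X_A:=(X_i)_{i\in A}$, $\mathbf{P}_A(x_A):=\mathbb{P}(X_A=x_A)$, and $\mathbb{L}^2_A:=\{f(X_A): f:\{0,1\}^{|A|}\to\mathbb{R}\}$, a Hilbert space for the inner product $\langle U,V\rangle:=\mathbb{E}[UV]$; $F^{\perp_A}$ denotes the orthogonal complement of a subspace $F$ in $\mathbb{L}^2_A$. *)

(* Defs.v *)
From HB Require Import structures.
From mathcomp Require Import all_boot all_order all_algebra.
Set Implicit Arguments. Unset Strict Implicit. Unset Printing Implicit Defensive.
Import Order.TTheory GRing.Theory Num.Theory.
Local Open Scope ring_scope.

(* Outcomes of X = (X_1,...,X_d) in {0,1}^d, indices D = 'I_d, true = 1. *)
Definition outcome (d : nat) := {ffun 'I_d -> bool}.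

(* A real random variable f(X) is represented by the function f on outcomes. *)
Section Defs.
Variables (R : realFieldType) (d : nat) (p : outcome d -> R).

Definition inner (U V : outcome d -> R) : R := \sum_x p x * U x * V x.

Definition inL2 (A : {set 'I_d}) (U : outcome d -> R) : Prop :=
  forall x y : outcome d, (forall i, i \in A -> x i = y i) -> U x = U y.

Definition as_const (U : outcome d -> R) : Prop :=
  exists c : R, forall x, 0 < p x -> U x = c.

Definition PA (A : {set 'I_d}) (x : outcome d) : R :=
  \sum_(y : outcome d | [forall i in A, y i == x i]) p y.

Definition eA (A : {set 'I_d}) (x : outcome d) : R :=
  (-1) ^+ (\sum_(j in A) (x j : nat))%N / PA A x.

Definition in_sum_proper (V : {set 'I_d} -> (outcome d -> R) -> Prop)
    (A : {set 'I_d}) (g : outcome d -> R) : Prop :=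
  exists G : {set 'I_d} -> outcome d -> R,
    (forall B : {set 'I_d}, B \proper A -> V B (G B)) /\
    (forall x, g x = \sum_(B : {set 'I_d} | B \proper A) G B x).

(* Vrec n A is the definition with recursion depth n; it is only used
   with n = #|A| (proper subsets B of A have #|B| <= #|A| - 1). *)
Fixpoint Vrec (n : nat) (A : {set 'I_d}) (U : outcome d -> R) : Prop :=
  if A == set0 then as_const U else
  match n with
  | O => False
  | S n' => (inL2 A U /\
             forall g, in_sum_proper (Vrec n') A g -> inner U g = 0)
  end.

Definition V (A : {set 'I_d}) (U : outcome d -> R) : Prop := Vrec #|A| A U.
End Defs.

(* Main.v *)
Require Import Defs.
From HB Require Import structures.
From mathcomp Require Import all_boot all_order all_algebra.
From mathcomp Require Import lra ring.
Set Implicit Arguments. Unset Strict Implicit. Unset Printing Implicit Defensive.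
Import Order.TTheory GRing.Theory Num.Theory.
Local Open Scope ring_scope.

Definition chi {R : realFieldType} {d} (A : {set 'I_d}) (x : outcome d) : R :=
  (-1) ^+ (\sum_(j in A) (x j : nat))%N.

Definition Phi {R : realFieldType} {d} (A : {set 'I_d}) (f : outcome d -> R) : R :=
  \sum_x chi A x * f x.

Definition flip {d} (j : 'I_d) (x : outcome d) : outcome d :=
  [ffun i => if i == j then ~~ x i else x i].

Lemma flipK d (j : 'I_d) : involutive (flip j).
Proof. by move=> x; apply/ffunP=> i; rewrite !ffunE; case: eqP => // _; rewrite negbK. Qed.

Lemma flip_inj d (j : 'I_d) : injective (flip j).
Proof. exact: inv_inj (@flipK d j). Qed.

Lemma chi_flip (R : realFieldType) d (A : {set 'I_d}) j x : j \in A ->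
  chi A (flip j x) = - chi A x :> R.
Proof.
move=> jA; rewrite /chi (bigD1 j jA) /= [in RHS](bigD1 j jA) /= !exprD.
rewrite ffunE eqxx (eq_bigr (fun i => (x i : nat))); last first.
  by move=> i /andP[_ /negbTE ij]; rewrite ffunE ij.
by case: (x j); rewrite /= ?expr1 ?expr0 ?mulN1r ?mul1r ?opprK.
Qed.

Lemma chi_sq (R : realFieldType) d (A : {set 'I_d}) x : chi A x * chi A x = 1 :> R.
Proof. by rewrite /chi -expr2 sqrr_sign. Qed.

Lemma Phi_flip (R : realFieldType) d (A : {set 'I_d}) j (f : outcome d -> R) :
  j \in A -> (forall x, f (flip j x) = f x) -> Phi A f = 0.
Proof.
move=> jA hf; have: Phi A f = - Phi A f.
  rewrite /Phi [LHS](reindex_inj (@flip_inj d j)) /= -sumrN.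
  by apply: eq_bigr => x _; rewrite hf chi_flip // mulNr.
move=> h; lra.
Qed.

Lemma inL2_flip (R : realFieldType) d B (f : outcome d -> R) j :
  inL2 B f -> j \notin B -> forall x, f (flip j x) = f x.
Proof.
move=> hf jB x; apply: hf => i iB; rewrite ffunE; case: eqP => // ij.
by move: jB; rewrite -ij iB.
Qed.

Lemma chi_prod (R : realFieldType) d (S : {set 'I_d}) x :
  chi S x = \prod_(j in S) (-1) ^+ (x j : nat) :> R.
Proof. by rewrite /chi expr_sum. Qed.

Lemma chi_orth (R : realFieldType) d (x y : outcome d) :
  \sum_S chi S x * chi S y = if x == y then 2 ^+ d else 0 :> R.
Proof.
pose e i : R := (-1) ^+ (x i : nat) * (-1) ^+ (y i : nat).
transitivity (\prod_i (e i + 1)).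
  rewrite [RHS]bigA_distr; apply: eq_big => // S _.
  rewrite !chi_prod -big_split /= [LHS]big_mkcond /=.
  by apply: eq_bigr => i _; case: (i \in S).
case: eqP => [exy|/eqP xy].
  rewrite (eq_bigr (fun _ => 2)); first by rewrite prodr_const card_ord.
  by move=> i _; rewrite /e exy -expr2 sqrr_sign.
have [i xyi] : exists i, x i != y i.
  apply/existsP; apply: contraNT xy => /existsPn h.
  by apply/eqP/ffunP => i; apply/eqP/negPn/h.
rewrite (bigD1 i) //= /e; move: xyi.
by case: (x i); case: (y i) => //= _; rewrite ?expr1 ?expr0 ?mulN1r ?mulr1 ?mul1r ?addNr ?mul0r.
Qed.

Lemma walsh (R : realFieldType) d (U : outcome d -> R) x :
  U x = \sum_S (Phi S U / 2 ^+ d) * chi S x.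
Proof.
have h2 : (2 ^+ d : R) != 0 by rewrite expf_eq0 pnatr_eq0 andbF.
transitivity (\sum_y U y * (\sum_S chi S x * chi S y) / 2 ^+ d).
  rewrite (bigD1 x) //= chi_orth eqxx mulfK // big1 ?addr0 //.
  by move=> y /negbTE yx; rewrite chi_orth eq_sym yx mulr0 mul0r.
rewrite /Phi; under eq_bigr => y _ do rewrite mulr_sumr mulr_suml.
rewrite exchange_big /=; apply: eq_bigr => S _.
rewrite mulr_suml mulr_suml; apply: eq_bigr => y _; ring.
Qed.

Lemma walsh_sub (R : realFieldType) d (A : {set 'I_d}) (U : outcome d -> R) x :
  inL2 A U -> U x = \sum_(S : {set 'I_d} | S \subset A) (Phi S U / 2 ^+ d) * chi S x.
Proof.
move=> hU; rewrite walsh [RHS]big_mkcond /=; apply: eq_bigr => S _.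
case: ifP => // /negbT /subsetPn [j jS jA].
by rewrite (Phi_flip jS (inL2_flip hU jA)) mul0r mul0r.
Qed.

Lemma inL2_mono (R : realFieldType) d (A B : {set 'I_d}) (f : outcome d -> R) :
  B \subset A -> inL2 B f -> inL2 A f.
Proof. by move=> /subsetP BA hf x y h; apply: hf => i /BA; apply: h. Qed.

Lemma inL2_chi (R : realFieldType) d (A : {set 'I_d}) : inL2 A (chi A : _ -> R).
Proof.
move=> x y h; rewrite /chi; congr (_ ^+ _); apply: eq_bigr => i iA; by rewrite h.
Qed.

Lemma inL2_PA (R : realFieldType) d (p : outcome d -> R) (A : {set 'I_d}) :
  inL2 A (PA p A).
Proof.
move=> x y h; rewrite /PA; apply: eq_bigl => z; apply: eq_forallb_in => i iA.
by rewrite h.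
Qed.

Lemma inL2_eA (R : realFieldType) d (p : outcome d -> R) (A : {set 'I_d}) :
  inL2 A (eA p A).
Proof.
move=> x y h; rewrite /eA (inL2_PA p h); congr (_ / _).
by have := @inL2_chi R _ _ _ _ h; rewrite /chi => ->.
Qed.

Lemma PA_gt0 (R : realFieldType) d (p : outcome d -> R) (A : {set 'I_d}) x :
  (forall x, 0 < p x) -> 0 < PA p A x.
Proof.
move=> pp; rewrite /PA (bigD1 x) /=; last by apply/forall_inP.
by apply: ltr_wpDr; [apply: sumr_ge0 => y _; apply/ltW | ].
Qed.

Lemma eA_chi (R : realFieldType) d (p : outcome d -> R) (A : {set 'I_d}) x :
  eA p A x = chi A x / PA p A x.
Proof. by []. Qed.

Definition spanA (R : realFieldType) d (p : outcome d -> R) (A : {set 'I_d})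
  (f : outcome d -> R) : Prop :=
  exists c : {set 'I_d} -> R,
    forall x, f x = \sum_(C : {set 'I_d} | C \subset A) c C * eA p C x.

Lemma span_ext (R : realFieldType) d (p : outcome d -> R) A (f g : outcome d -> R) :
  (forall x, f x = g x) -> spanA p A f -> spanA p A g.
Proof. by move=> fg [c hc]; exists c => x; rewrite -fg. Qed.

Lemma span0 (R : realFieldType) d (p : outcome d -> R) A :
  spanA p A (fun _ => 0).
Proof. by exists (fun _ => 0) => x; rewrite big1 // => C _; rewrite mul0r. Qed.

Lemma spanD (R : realFieldType) d (p : outcome d -> R) A (f g : outcome d -> R) :
  spanA p A f -> spanA p A g -> spanA p A (fun x => f x + g x).
Proof.
move=> [c hc] [c' hc']; exists (fun C => c C + c' C) => x.
by rewrite hc hc' -big_split /=; apply: eq_bigr => C _; rewrite mulrDl.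
Qed.

Lemma spanZ (R : realFieldType) d (p : outcome d -> R) A (f : outcome d -> R) a :
  spanA p A f -> spanA p A (fun x => a * f x).
Proof.
move=> [c hc]; exists (fun C => a * c C) => x.
by rewrite hc mulr_sumr; apply: eq_bigr => C _; rewrite mulrA.
Qed.

Lemma span_eA (R : realFieldType) d (p : outcome d -> R) A :
  spanA p A (eA p A).
Proof.
exists (fun C => if C == A then 1 else 0) => x.
rewrite (bigD1 A) //= eqxx mul1r big1 ?addr0 // => C /andP[_ /negbTE ->].
by rewrite mul0r.
Qed.

Lemma span_mono (R : realFieldType) d (p : outcome d -> R) (A B : {set 'I_d}) (f : outcome d -> R) :
  B \subset A -> spanA p B f -> spanA p A f.
Proof.
move=> BA [c hc]; exists (fun C : {set 'I_d} => if C \subset B then c C else 0) => x.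
rewrite hc [RHS]big_mkcond /= [LHS]big_mkcond /=; apply: eq_bigr => C _.
case CB: (C \subset B); last by case: ifP => //; rewrite mul0r.
by rewrite (subset_trans CB BA).
Qed.

Lemma span_sum (R : realFieldType) d (p : outcome d -> R) A (r : seq {set 'I_d})
   (P : pred {set 'I_d}) (F : {set 'I_d} -> outcome d -> R) :
  (forall T, P T -> spanA p A (F T)) ->
  spanA p A (fun x => \sum_(T <- r | P T) F T x).
Proof.
move=> hF; elim: r => [|T r IH].
  by apply: span_ext (span0 p A) => x; rewrite big_nil.
case PT: (P T).
  by apply: span_ext (spanD (hF T PT) IH) => x; rewrite big_cons PT.
by apply: span_ext IH => x; rewrite big_cons PT.
Qed.

Lemma PhiB (R : realFieldType) d (S : {set 'I_d}) (f g : outcome d -> R) c :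
  Phi S (fun x => f x - c * g x) = Phi S f - c * Phi S g.
Proof.
rewrite /Phi mulr_sumr -sumrB; apply: eq_bigr => x _; ring.
Qed.

Definition x0 d : outcome d := [ffun => false].

Lemma Phi_eA_gt0 (R : realFieldType) d (p : outcome d -> R) (S : {set 'I_d}) :
  (forall x, 0 < p x) -> 0 < Phi S (eA p S).
Proof.
move=> pp.
have h : forall x, 0 < chi S x * eA p S x.
  by move=> x; rewrite /eA mulrA chi_sq mul1r invr_gt0 PA_gt0.
rewrite /Phi (bigD1 (x0 d)) //=; apply: ltr_wpDr => //.
by apply: sumr_ge0 => x _; apply/ltW.
Qed.

Lemma chi_span_step (R : realFieldType) d (p : outcome d -> R) (S : {set 'I_d}) :
  (forall x, 0 < p x) ->
  (forall T : {set 'I_d}, T \proper S -> spanA p T (chi T)) -> spanA p S (chi S).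
Proof.
move=> pp IH.
pose c := Phi S (chi S) / Phi S (eA p S).
pose f := fun x => chi S x - c * eA p S x.
have hPhi : Phi S f = 0.
  rewrite /f PhiB /c divfK ?subrr //.
  by rewrite gt_eqF // Phi_eA_gt0.
have fL2 : inL2 S f.
  by move=> x y h; rewrite /f (@inL2_chi R _ _ _ _ h) (inL2_eA p h).
have spf : spanA p S f.
  apply: span_ext (fun x => esym (walsh_sub x fL2)) _.
  apply: (span_ext (f := fun x => \sum_(T : {set 'I_d} | T \proper S) (Phi T f / 2 ^+ d) * chi T x)).
    move=> x; rewrite [RHS](bigD1 S) //= hPhi !mul0r add0r.
    by apply: eq_bigl => T; rewrite properEneq andbC.
  apply: span_sum => T TS; apply: spanZ; apply: span_mono (proper_sub TS) _.
  exact: IH.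
apply: span_ext (spanD spf (spanZ c (span_eA p S))) => x.
by rewrite /f subrK.
Qed.

Lemma chi_span (R : realFieldType) d (p : outcome d -> R) (S : {set 'I_d}) :
  (forall x, 0 < p x) -> spanA p S (chi S).
Proof.
move=> pp; move: {2}#|S| (leqnn #|S|) => n; elim: n S => [|n IH] S hS.
  apply: chi_span_step => // T /proper_card; rewrite ltnNge => /negP [].
  exact: leq_trans hS _.
apply: chi_span_step => // T /proper_card TS; apply: IH.
by rewrite -ltnS (leq_trans TS hS).
Qed.

Lemma L2_span (R : realFieldType) d (p : outcome d -> R) (A : {set 'I_d}) U :
  (forall x, 0 < p x) -> inL2 A U -> spanA p A U.
Proof.
move=> pp hU; apply: span_ext (fun x => esym (walsh_sub x hU)) _.
apply: span_sum => T TA; apply: spanZ; apply: span_mono TA _.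
exact: chi_span.
Qed.

Definition Ncl (R : realFieldType) d (A : {set 'I_d}) (y : outcome d) : R :=
  \sum_(x : outcome d | [forall i in A, x i == y i]) 1.

Lemma Ncl_const (R : realFieldType) d (A : {set 'I_d}) (y z : outcome d) :
  Ncl R A y = Ncl R A z.
Proof.
pose h (x : outcome d) : outcome d := [ffun i => x i (+) y i (+) z i].
have hK : involutive h.
  by move=> x; rewrite /h; apply/ffunP => i; rewrite !ffunE; case: (x i); case: (y i); case: (z i).
rewrite /Ncl [RHS](reindex_inj (inv_inj hK)) /=; apply: eq_bigl => x.
apply: eq_forallb_in => i _; rewrite ffunE.
by case: (x i); case: (y i); case: (z i).
Qed.

Lemma Ncl_gt0 (R : realFieldType) d (A : {set 'I_d}) y : 0 < Ncl R A y.
Proof.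
rewrite /Ncl (bigD1 y) /=; last by apply/forall_inP.
by apply: ltr_wpDr => //; apply: sumr_ge0.
Qed.

Lemma Phi_inner (R : realFieldType) d (p : outcome d -> R) (A : {set 'I_d}) f :
  (forall x, 0 < p x) -> inL2 A f ->
  Phi A f = Ncl R A (x0 d) * inner p (eA p A) f.
Proof.
move=> pp hf.
pose T x := chi A x * f x / PA p A x.
have hT : inL2 A T.
  by move=> x y h; rewrite /T (@inL2_chi R _ _ _ _ h) (hf _ _ h) (inL2_PA p h).
transitivity (\sum_x PA p A x * T x).
  apply: eq_bigr => x _; rewrite /T [RHS]mulrC divfK //.
  by rewrite gt_eqF // PA_gt0.
under eq_bigr do rewrite /PA mulr_suml big_mkcond /=.
rewrite exchange_big /= /inner mulr_sumr; apply: eq_bigr => y _.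
transitivity (\sum_(x : outcome d | [forall i in A, x i == y i]) p y * T y).
  rewrite [RHS]big_mkcond /=; apply: eq_bigr => x _.
  have -> : [forall i in A, y i == x i] = [forall i in A, x i == y i].
    by apply: eq_forallb_in => i _; rewrite eq_sym.
  case: ifP => // /forall_inP h; rewrite (hT x y) // => i iA.
  exact/eqP/h.
rewrite -(Ncl_const R A y) /Ncl mulr_suml; apply: eq_bigr => x _; rewrite mul1r /T /eA -/(chi A y); ring.
Qed.

Lemma orth (R : realFieldType) d (p : outcome d -> R) (A B : {set 'I_d}) :
  (forall x, 0 < p x) -> B \proper A -> inner p (eA p A) (eA p B) = 0.
Proof.
move=> pp /properP [BA [j jA jB]].
have h := Phi_inner pp (inL2_mono BA (@inL2_eA _ _ p B)).
have : Phi A (eA p B) = 0 by apply: (Phi_flip jA (inL2_flip (@inL2_eA _ _ p B) jB)).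
rewrite h => /eqP; rewrite mulf_eq0 gt_eqF ?Ncl_gt0 //=; exact/eqP.
Qed.

Lemma innerC (R : realFieldType) d (p : outcome d -> R) f g :
  inner p f g = inner p g f.
Proof. by apply: eq_bigr => x _; rewrite mulrAC. Qed.

Lemma inner_sum (R : realFieldType) d (p : outcome d -> R) U (P : pred {set 'I_d})
  (G : {set 'I_d} -> outcome d -> R) :
  inner p U (fun x => \sum_(B | P B) G B x) = \sum_(B | P B) inner p U (G B).
Proof.
rewrite /inner exchange_big /=; apply: eq_bigr => x _; by rewrite mulr_sumr.
Qed.

Lemma innerZr (R : realFieldType) d (p : outcome d -> R) U g c :
  inner p U (fun x => c * g x) = c * inner p U g.
Proof. rewrite /inner mulr_sumr; apply: eq_bigr => x _; ring. Qed.

Lemma inner_ext (R : realFieldType) d (p : outcome d -> R) U g h :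
  (forall x, g x = h x) -> inner p U g = inner p U h.
Proof. by move=> gh; apply: eq_bigr => x _; rewrite gh. Qed.

Lemma Phi_sum (R : realFieldType) d (S : {set 'I_d}) (G : {set 'I_d} -> outcome d -> R) :
  Phi S (fun x => \sum_B G B x) = \sum_B Phi S (G B).
Proof.
rewrite /Phi exchange_big /=; apply: eq_bigr => x _; by rewrite mulr_sumr.
Qed.

Lemma indep (R : realFieldType) d (p : outcome d -> R) (c : {set 'I_d} -> R) :
  (forall x, 0 < p x) ->
  (forall x, \sum_(A : {set 'I_d}) c A * eA p A x = 0) -> forall A, c A = 0.
Proof.
move=> pp hc A0; apply/eqP/negPn/negP => cA0.
case: (@arg_maxnP _ A0 (fun A => c A != 0) (fun A => #|A|) cA0) => M cM maxM.
have : Phi M (fun x => \sum_(A : {set 'I_d}) c A * eA p A x) = 0.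
  by rewrite /Phi big1 // => x _; rewrite hc mulr0.
rewrite Phi_sum (bigD1 M) //= big1 ?addr0.
  have -> : Phi M (fun x => c M * eA p M x) = c M * Phi M (eA p M).
    by rewrite /Phi mulr_sumr; apply: eq_bigr => x _; ring.
  move/eqP; rewrite mulf_eq0 (negbTE cM) /=.
  by rewrite gt_eqF // Phi_eA_gt0.
move=> C CM.
have [MC|nMC] := boolP (M \subset C).
  have MC' : M \proper C by rewrite properEneq eq_sym CM.
  have -> : c C = 0.
    apply/eqP/negPn/negP => cC; have /= := maxM C cC.
    by rewrite leqNgt proper_card.
  by rewrite /Phi big1 // => x _; rewrite mul0r mulr0.
case/subsetPn: nMC => j jM jC.
have := Phi_flip jM (inL2_flip (@inL2_eA _ _ p C) jC).
rewrite /Phi => h; under eq_bigr do rewrite mulrCA.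
by rewrite -mulr_sumr h mulr0.
Qed.

Lemma inner_self0 (R : realFieldType) d (p : outcome d -> R) f :
  (forall x, 0 < p x) -> inner p f f = 0 -> forall x, f x = 0.
Proof.
move=> pp h x.
have h0 : forall y, predT y -> 0 <= p y * f y * f y.
  by move=> y _; rewrite -mulrA -expr2 mulr_ge0 ?sqr_ge0 ?ltW.
have := @psumr_eq0P _ _ predT (fun x => p x * f x * f x) h0 h x isT.
by move=> /= /eqP; rewrite -mulrA mulf_eq0 gt_eqF //= mulf_eq0 orbb => /eqP.
Qed.

Lemma eA_neq0 (R : realFieldType) d (p : outcome d -> R) A x :
  (forall x, 0 < p x) -> eA p A x != 0.
Proof.
move=> pp; rewrite /eA -/(chi A x) mulf_eq0 invr_eq0 negb_or (gt_eqF (PA_gt0 A x pp)) andbT.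
by apply/eqP => h; have := chi_sq R A x; rewrite h mul0r => /eqP; rewrite eq_sym oner_eq0.
Qed.

Lemma Vrec_eq (R : realFieldType) d (p : outcome d -> R) n : forall m (B : {set 'I_d}) U,
  (#|B| <= n)%N -> (#|B| <= m)%N -> (Vrec p n B U <-> Vrec p m B U).
Proof.
elim: n => [|n IH] m B U hn hm.
  have -> : B = set0 by apply/eqP; rewrite -cards_eq0 -leqn0.
  by case: m {hm} => [|m] /=; rewrite eqxx.
case: m hm => [|m] hm.
  have -> : B = set0 by apply/eqP; rewrite -cards_eq0 -leqn0.
  by rewrite /= eqxx.
rewrite /=; case: ifP => // _.
have key : forall g, in_sum_proper (Vrec p n) B g <-> in_sum_proper (Vrec p m) B g.
  move=> g; split => -[G [hG hg]]; exists G; split => // C CB;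
    have hC := proper_card CB; [apply/(IH m) | apply/(IH m)]; try exact: hG;
    by rewrite -ltnS (leq_trans hC).
split => -[h1 h2]; split => // g /key; exact: h2.
Qed.

Lemma Vrec_V (R : realFieldType) d (p : outcome d -> R) n (B : {set 'I_d}) U :
  (#|B| <= n)%N -> (Vrec p n B U <-> V p B U).
Proof. by move=> h; apply: Vrec_eq. Qed.

Lemma eA_set0 (R : realFieldType) d (p : outcome d -> R) x :
  \sum_x p x = 1 -> eA p set0 x = 1.
Proof.
move=> ps; rewrite /eA big_set0 expr0 /PA.
rewrite (eq_bigl predT) ?ps ?invr1 ?mul1r // => y.
by apply/forall_inP => i; rewrite in_set0.
Qed.

Lemma V0 (R : realFieldType) d (p : outcome d -> R) U :
  (forall x, 0 < p x) -> \sum_x p x = 1 ->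
  V p set0 U <-> exists c, forall x, U x = c * eA p set0 x.
Proof.
move=> pp ps; rewrite /V cards0 /= eqxx; split => -[c hc]; exists c => x.
  by rewrite eA_set0 // mulr1 hc.
by move=> _; rewrite hc eA_set0 // mulr1.
Qed.

Lemma V_step (R : realFieldType) d (p : outcome d -> R) (A : {set 'I_d}) :
  (forall x, 0 < p x) -> A != set0 ->
  (forall B : {set 'I_d}, B \proper A -> forall U, V p B U <-> exists c, forall x, U x = c * eA p B x) ->
  forall U, V p A U <-> exists c, forall x, U x = c * eA p A x.
Proof.
move=> pp A0 IH U.
have [k hk] : exists k, #|A| = k.+1.
  by move: A0; rewrite -card_gt0; case: #|A| => // k _; exists k.
have hB : forall B : {set 'I_d}, B \proper A -> forall W,
    Vrec p k B W <-> exists c, forall x, W x = c * eA p B x.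
  move=> B BA W; rewrite -IH //; apply: Vrec_V.
  by have := proper_card BA; rewrite hk ltnS.
rewrite /V hk /= (negbTE A0).
split.
- move=> [hU horth].
  have o : forall B : {set 'I_d}, B \proper A -> inner p U (eA p B) = 0.
    move=> B BA; apply: horth.
    exists (fun B' x => if B' == B then eA p B x else 0); split.
      move=> B' B'A; apply/(hB _ B'A); case: (eqVneq B' B) => [->|ne].
        by exists 1 => x /=; rewrite mul1r.
      by exists 0 => x /=; rewrite ?(negbTE ne) mul0r.
    move=> x; rewrite (bigD1 B) //= eqxx big1 ?addr0 // => B' /andP[_ /negbTE ->].
    by [].
  pose c := inner p U (eA p A) / inner p (eA p A) (eA p A).
  pose f x := U x - c * eA p A x.
  have ee : inner p (eA p A) (eA p A) != 0.
    apply/eqP => h; have := inner_self0 pp h (x0 d).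
    by move/eqP; rewrite (negbTE (@eA_neq0 _ _ p A (x0 d) pp)).
  have fL2 : inL2 A f by move=> x y h; rewrite /f (hU x y h) (@inL2_eA _ _ p A x y h).
  have fo : forall C : {set 'I_d}, C \subset A -> inner p f (eA p C) = 0.
    move=> C CA.
    have -> : inner p f (eA p C) = inner p U (eA p C) - c * inner p (eA p A) (eA p C).
      rewrite /inner mulr_sumr -sumrB; apply: eq_bigr => x _; rewrite /f; ring.
    case: (eqVneq C A) => [->|CA'].
      by rewrite /c divfK ?subrr.
    have CpA : C \proper A by rewrite properEneq CA' CA.
    by rewrite o // orth // mulr0 subr0.
  have [dd hd] := L2_span pp fL2.
  have ff : inner p f f = 0.
    rewrite (inner_ext p f hd) inner_sum big1 // => C CA.
    by rewrite innerZr fo // mulr0.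
  exists c => x; have := inner_self0 pp ff x; rewrite /f => /eqP.
  by rewrite subr_eq0 => /eqP.
- case=> c hc; split.
    by move=> x y h; rewrite !hc (@inL2_eA _ _ p A x y h).
  move=> g [G [hG hg]]; rewrite (inner_ext p U hg) inner_sum big1 // => B BA.
  have [cB hcB] := (hB B BA (G B)).1 (hG B BA).
  rewrite (inner_ext p U hcB) innerZr innerC (inner_ext p _ hc) innerZr innerC.
  by rewrite orth // !mulr0.
Qed.

Lemma V_char (R : realFieldType) d (p : outcome d -> R) :
  (forall x, 0 < p x) -> \sum_x p x = 1 ->
  forall (A : {set 'I_d}) U, V p A U <-> exists c, forall x, U x = c * eA p A x.
Proof.
move=> pp ps A; move: {2}#|A| (leqnn #|A|) => n; elim: n A => [|n IH] A hA U.
  have -> : A = set0 by apply/eqP; rewrite -cards_eq0 -leqn0.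
  exact: V0.
case: (eqVneq A set0) => [->|A0]; first exact: V0.
apply: V_step => // B BA; apply: IH.
by rewrite -ltnS (leq_trans (proper_card BA) hA).
Qed.

Unset Implicit Arguments. Set Strict Implicit. Set Printing Implicit Defensive.

Theorem proposition4 (R : realFieldType) (d : nat) (p : outcome d -> R)
  (p_pos : forall x, 0 < p x) (p_sum : \sum_x p x = 1)
:
  (forall (A : {set 'I_d}) (U : outcome d -> R),
     V p A U <-> exists c : R, forall x, U x = c * eA p A x)
  /\ (forall A B : {set 'I_d}, B \proper A ->
        inner p (eA p A) (eA p B) = 0)
  /\ (forall U : outcome d -> R, exists c : {set 'I_d} -> R,
        forall x, U x = \sum_(A : {set 'I_d}) c A * eA p A x)
  /\ (forall c : {set 'I_d} -> R,
        (forall x, \sum_(A : {set 'I_d}) c A * eA p A x = 0) ->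
        forall A, c A = 0).
Proof.
split; first exact: V_char.
split; first by move=> A B; apply: orth.
split; last by move=> c; apply: indep.
move=> U.
have hU : inL2 [set: 'I_d] U.
  move=> x y h; congr U; apply/ffunP => i; exact: h (in_setT i).
have [c hc] := L2_span p_pos hU; exists c => x; rewrite hc.
by apply: eq_bigl => C; rewrite subsetT.
Qed.
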